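(* Let $\mathcal A\in\mathbb C^{n\times n}$ be nonsingular and suppose $\mathcal A=\mathcal P_1+\mathcal P_2$ with $\mathcal P_1,\mathcal P_2$ positive semidefinite, and let $\Sigma$ be Hermitian positive definite. Let $\tilde{\mathcal A}=\Sigma^{-1/2}\mathcal A\Sigma^{-1/2}$, $\tilde{\mathcal P}_i=\Sigma^{-1/2}\mathcal P_i\Sigma^{-1/2}$ ($i=1,2$), and $K=\tilde{\mathcal A}+\tilde{\mathcal P}_1^*\tilde{\mathcal P}_2^*\tilde{\mathcal A}$. If $K$ is positive definite, then the PPS method is convergent, i.e. $\rho(\Gamma_{\mathrm{PPS}})<1$, where $\Gamma_{\mathrm{PPS}}=(\Sigma+\mathcal P_1)^{-1}(\Sigma-\mathcal P_2)(\Sigma+\mathcal P_2)^{-1}(\Sigma-\mathcal P_1)$.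
   Context: A matrix $\mathcal P\in\mathbb C^{n\times n}$ is called positive semidefinite if $\mathcal P+\mathcal P^*$ is Hermitian positive semidefinite, and positive definite if $\mathcal P+\mathcal P^*$ is Hermitian positive definite; $\mathcal P$ need not be Hermitian. $\rho(\cdot)$ is the spectral radius; $\Sigma^{1/2}$ is the HPD square root of the HPD matrix $\Sigma$. The PPS method is the iteration $(\Sigma+\mathcal P_2)u^{k+1/2}=(\Sigma-\mathcal P_1)u^k+b$, $(\Sigma+\mathcal P_1)u^{k+1}=(\Sigma-\mathcal P_2)u^{k+1/2}+b$ for solving $\mathcal A u=b$; its iteration matrix is $\Gamma_{\mathrm{PPS}}$, and it converges for every initial guess iff $\rho(\Gamma_{\mathrm{PPS}})<1$. *)

(* Defs.v *)
(* complex numbers are algC (algebraic complex numbers,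
   a numClosedFieldType with conjugation conjC). *)
From HB Require Import structures.
From mathcomp Require Import all_boot all_order all_algebra algC.
Set Implicit Arguments. Unset Strict Implicit. Unset Printing Implicit Defensive.
Import Order.TTheory GRing.Theory Num.Theory.
Local Open Scope ring_scope.

Definition ctr (m n : nat) (M : 'M[algC]_(m, n)) : 'M[algC]_(n, m) :=
  (map_mx Num.conj M)^T.

Definition hermitian (n : nat) (H : 'M[algC]_n) : Prop := ctr H = H.

Definition hpsd (n : nat) (H : 'M[algC]_n) : Prop :=
  hermitian H /\ forall x : 'cV[algC]_n, 0 <= (ctr x *m H *m x) 0 0.

Definition hpd (n : nat) (H : 'M[algC]_n) : Prop :=
  hermitian H /\ forall x : 'cV[algC]_n, x != 0 -> 0 < (ctr x *m H *m x) 0 0.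

(* The paper's (possibly non-Hermitian) positive semidefinite / definite:
   P + P^* is Hermitian positive semidefinite / definite. *)
Definition psd (n : nat) (P : 'M[algC]_n) : Prop := hpsd (P + ctr P).
Definition pd (n : nat) (P : 'M[algC]_n) : Prop := hpd (P + ctr P).

(* rho(M) < 1 : every eigenvalue of M has modulus < 1 (the spectrum is finite,
   so this is exactly "the maximum modulus of the eigenvalues is < 1"). *)
Definition spectral_radius_lt1 (n : nat) (M : 'M[algC]_n) : Prop :=
  forall l : algC, eigenvalue M l -> `|l| < 1.

Definition Gamma_PPS (n : nat) (Sigma P1 P2 : 'M[algC]_n) : 'M[algC]_n :=
  invmx (Sigma + P1) *m (Sigma - P2) *m invmx (Sigma + P2) *m (Sigma - P1).

(* Main.v *)
Require Import Defs.
From HB Require Import structures.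
From mathcomp Require Import all_boot all_order all_algebra algC.
From mathcomp Require Import ring.
Import Order.TTheory GRing.Theory Num.Theory.
Local Open Scope ring_scope.
Set Implicit Arguments. Unset Strict Implicit.

Lemma ctrK m n (M : 'M[algC]_(m, n)) : ctr (ctr M) = M.
Proof. by apply/matrixP => i j; rewrite !mxE conjCK. Qed.

Lemma ctrM m n p (A : 'M[algC]_(m, n)) (B : 'M[algC]_(n, p)) :
  ctr (A *m B) = ctr B *m ctr A.
Proof. by rewrite /ctr map_mxM trmx_mul. Qed.

Lemma ctrD m n (A B : 'M[algC]_(m, n)) : ctr (A + B) = ctr A + ctr B.
Proof. by apply/matrixP => i j; rewrite !mxE rmorphD. Qed.

Lemma ctrN m n (A : 'M[algC]_(m, n)) : ctr (- A) = - ctr A.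
Proof. by apply/matrixP => i j; rewrite !mxE rmorphN. Qed.

Lemma ctrB m n (A B : 'M[algC]_(m, n)) : ctr (A - B) = ctr A - ctr B.
Proof. by rewrite ctrD ctrN. Qed.

Lemma ctr_inv n (A : 'M[algC]_n) : ctr (invmx A) = invmx (ctr A).
Proof. by rewrite /ctr map_invmx trmx_inv. Qed.

Lemma ctr11 (a : 'M[algC]_1) : ctr a 0 0 = (a 0 0)^*.
Proof. by rewrite !mxE. Qed.

Lemma ctr_scalar n (a : algC) : ctr (a%:M : 'M_n) = (a^*)%:M.
Proof. by apply/matrixP => i j; rewrite !mxE eq_sym; case: eqP; rewrite ?rmorph0 ?rmorphMn. Qed.

Lemma unit_of_form n (H : 'M[algC]_n) :
  (forall x : 'cV[algC]_n, x != 0 -> (ctr x *m H *m x) 0 0 != 0) ->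
  H \in unitmx.
Proof.
move=> Hx; rewrite unitmxE unitfE; apply/negP => /det0P [v v0 vH].
have Hv : ctr v != 0.
  apply: contra v0 => /eqP/(congr1 (@ctr _ _)); rewrite ctrK => ->.
  by apply/eqP/matrixP => i j; rewrite !mxE rmorph0.
by move: (Hx _ Hv); rewrite ctrK vH mul0mx mxE eqxx.
Qed.
Lemma final_scalar (c d l : algC) : 0 < c -> 0 < d + d^* ->
  (1 - l) * (c + d) = 2 * c -> `|l| < 1.
Proof.
move=> c0 d0 e.
have cc : c^* = c by rewrite geC0_conj // ltW.
have el : l * (c + d) = d - c.
  have -> : l * (c + d) = (c + d) - (1 - l) * (c + d) by ring.
  by rewrite e; ring.
set N := (c + d) * (c + d)^*.
have key : `|l| ^+ 2 * N = (d - c) * (d - c)^*.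
  by rewrite normCK /N -el rmorphM; ring.
have diff : N - (d - c) * (d - c)^* = 2 * c * (d + d^*).
  by rewrite /N !rmorphD ?rmorphN ?rmorphB /=; rewrite cc; ring.
have N0 : 0 <= N by rewrite /N -normCK exprn_ge0.
have Npos : 0 < N.
  have : 0 < N - (d - c) * (d - c)^* by rewrite diff !mulr_gt0.
  rewrite -key subr_gt0 => H; apply: le_lt_trans H.
  by rewrite mulr_ge0 // exprn_ge0.
have : `|l| ^+ 2 * N < N by rewrite -subr_gt0 key diff !mulr_gt0.
rewrite gtr_pMl // => H.
by move: H; rewrite expr_lt1.
Qed.

Lemma form_ctr n (x : 'cV[algC]_n) (P : 'M[algC]_n) :
  (ctr x *m ctr P *m x) 0 0 = ((ctr x *m P *m x) 0 0)^*.
Proof. by rewrite -ctr11 !ctrM ctrK mulmxA. Qed.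

Lemma hpd_unit n (H : 'M[algC]_n) : hpd H -> H \in unitmx.
Proof. by case=> _ Hp; apply: unit_of_form => x /Hp /gt_eqF ->. Qed.

Lemma psd_unit n (H P : 'M[algC]_n) : hpd H -> psd P -> H + P \in unitmx.
Proof.
case=> _ Hp [_ Pp]; apply: unit_of_form => x x0.
have s0 := Hp x x0; have p0 := Pp x.
rewrite mulmxDr mulmxDl mxE form_ctr in p0.
rewrite mulmxDr mulmxDl mxE; apply/eqP => e.
have ep : (ctr x *m P *m x) 0 0 = - (ctr x *m H *m x) 0 0.
  by apply/eqP; rewrite -addr_eq0 addrC e.
move: p0; rewrite ep rmorphN /= (geC0_conj (ltW s0)) -opprD oppr_ge0 => h.
by have := lt_le_trans (addr_gt0 s0 s0) h; rewrite ltxx.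

Qed.

Lemma lincomb2 m n (p q p1 q1 p2 q2 : 'M[algC]_(m, n)) (k1 k2 : algC) :
  p1 = q1 -> p2 = q2 -> p - q = k1 *: (p1 - q1) + k2 *: (p2 - q2) -> p = q.
Proof. by move=> -> -> ; rewrite !subrr !scaler0 addr0 => /eqP; rewrite subr_eq0 => /eqP. Qed.

Lemma entryD m n (A B : 'M[algC]_(m, n)) i j : (A + B) i j = A i j + B i j.
Proof. by rewrite mxE. Qed.
Lemma entryZ m n a (A : 'M[algC]_(m, n)) i j : (a *: A) i j = a * A i j.
Proof. by rewrite mxE. Qed.

Unset Implicit Arguments.
Theorem corollary3p5 (n : nat) (A P1 P2 Sigma S : 'M[algC]_n) :
  A \in unitmx ->
  A = P1 + P2 -> psd P1 -> psd P2 ->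
  hpd Sigma -> hpd S -> S *m S = Sigma ->
  let At := invmx S *m A *m invmx S in
  let P1t := invmx S *m P1 *m invmx S in
  let P2t := invmx S *m P2 *m invmx S in
  let K := At + ctr P1t *m ctr P2t *m At in
  pd K ->
  spectral_radius_lt1 (Gamma_PPS Sigma P1 P2).
Proof.
move=> HA eA ps1 ps2 hSig hS eSS At P1t P2t K pdK l /eigenvalueP [v vG v0].
have : \det (l%:M - Gamma_PPS Sigma P1 P2) == 0.
  by apply/det0P; exists v => //; rewrite mulmxBr vG mul_mx_scalar subrr.
rewrite -det_tr => /det0P [w w0 wG].
set x := w^T.
have x0 : x != 0 by rewrite trmx_eq0.
have Gx : Gamma_PPS Sigma P1 P2 *m x = l *: x.
  have := congr1 trmx wG; rewrite trmx_mul trmxK trmx0 mulmxBl mul_scalar_mx.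
  by move/eqP; rewrite subr_eq0 => /eqP ->.
clearbody x; clear w w0 wG v vG v0.
have Su := hpd_unit hS.
have G1u := psd_unit hSig ps1.
have G2u := psd_unit hSig ps2.
set T := invmx S.
have cT : ctr T = T by rewrite /T ctr_inv (proj1 hS).
have TS : forall m (X : 'M_(n, m)), T *m (S *m X) = X by move=> m X; rewrite mulKmx.
have ST : forall m (X : 'M_(n, m)), S *m (T *m X) = X by move=> m X; rewrite mulKVmx.
set M := T *m T.
have cM : ctr M = M by rewrite /M ctrM cT.
have MS : forall m (X : 'M_(n, m)), M *m (Sigma *m X) = X.
  by move=> m X; rewrite -eSS /M -!mulmxA TS TS.
have SM : forall m (X : 'M_(n, m)), Sigma *m (M *m X) = X.
  by move=> m X; rewrite -eSS /M -!mulmxA ST ST.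
have eM : M = T *m T by [].
clearbody M.
rewrite /Gamma_PPS -!mulmxA in Gx.
set w := invmx (Sigma + P2) *m ((Sigma - P1) *m x) in Gx.
have H1 : (Sigma + P2) *m w = (Sigma - P1) *m x by rewrite /w mulKVmx.
have H2 : (Sigma - P2) *m w = l *: ((Sigma + P1) *m x).
  by have := congr1 (mulmx (Sigma + P1)) Gx; rewrite mulKVmx // -scalemxAr.
have E1 : Sigma *m w + P2 *m w = Sigma *m x - P1 *m x by rewrite -mulmxDl -mulmxBl.
have E2 : Sigma *m w - P2 *m w = l *: (Sigma *m x + P1 *m x) by rewrite -mulmxDl -mulmxBl.
clearbody w; clear H1 H2 Gx.
have D1 : 2 *: (Sigma *m w) = (Sigma *m x - P1 *m x) + l *: (Sigma *m x + P1 *m x).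
  apply: (lincomb2 (k1:=1) (k2:=1) E1 E2).
  move: (Sigma *m w) (P2 *m w) (Sigma *m x) (P1 *m x) => a b c d.
  by apply/matrixP => i j; rewrite !mxE; ring.
have D2 : 2 *: (P2 *m w) = (Sigma *m x - P1 *m x) - l *: (Sigma *m x + P1 *m x).
  apply: (lincomb2 (k1:=1) (k2:=-1) E1 E2).
  move: (Sigma *m w) (P2 *m w) (Sigma *m x) (P1 *m x) => a b c d.
  by apply/matrixP => i j; rewrite !mxE; ring.
have D3 := congr1 (mulmx (P2 *m M)) D1.
rewrite !linearD /= !linearN /= !linearZ /= -!mulmxA !MS in D3.
have E : 2 *: (P1 *m x + P2 *m x) =
   (1 - l) *: (Sigma *m x + P1 *m x + P2 *m x + P2 *m (M *m (P1 *m x))).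
  apply: (lincomb2 (k1:=-1) (k2:=1) D3 D2).
  move: (P2 *m (M *m (P1 *m x))) (P2 *m w) (Sigma *m x) (P1 *m x) (P2 *m x) => a b c d e.
  by apply/matrixP => i j; rewrite !mxE; ring.
set u := P1 *m x + P2 *m x.
set Fb := P2 *m (M *m (P1 *m x)).
have E' : 2 *: u = (1 - l) *: (u + (Sigma *m x + Fb)).
  apply: (lincomb2 (k1:=1) (k2:=0) E (erefl u)).
  rewrite /u /Fb; move: (P2 *m (M *m (P1 *m x))) (Sigma *m x) (P1 *m x) (P2 *m x) => a b c d.
  by apply/matrixP => i j; rewrite !mxE; ring.
have Ex := congr1 (fun y => (ctr u *m M *m y) 0 0) E'.
rewrite /= -!scalemxAr !mulmxDr !entryZ !entryD in Ex.
have ux : u = A *m x by rewrite eA mulmxDl.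
have u0 : u != 0.
  apply: contra x0; rewrite ux => /eqP Ax0.
  by rewrite -(mulKmx HA x) Ax0 mulmx0.
have cpos : 0 < (ctr u *m M *m u) 0 0.
  have z0 : M *m u != 0.
    by apply: contra u0 => /eqP Mu0; rewrite -(SM _ u) Mu0 mulmx0.
  have := (proj2 hSig) _ z0.
  by rewrite ctrM cM -!mulmxA MS.
set d := (ctr u *m M *m (Sigma *m x)) 0 0 + (ctr u *m M *m Fb) 0 0.
have dpos : 0 < d + d^*.
  have y0 : S *m x != 0.
    by apply: contra x0 => /eqP Sx0; rewrite -(TS _ x) Sx0 mulmx0.
  have := (proj2 pdK) _ y0.
  rewrite mulmxDr mulmxDl entryD form_ctr.
  suff -> : (ctr (S *m x) *m K *m (S *m x)) 0 0 = d^* by rewrite conjCK addrC.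
  rewrite /d rmorphD /= -!ctr11 !ctrM ?ctrK cM /Fb.
  rewrite ux /K /At /P1t /P2t -/T !ctrM cT (proj1 hS) (proj1 hSig).
  rewrite mulmxDr mulmxDl entryD.
  rewrite -!mulmxA !ST !TS SM eM -!mulmxA.
  done.
apply: (final_scalar cpos dpos).
have ipu : (ctr u *m M *m u) 0 0 =
    (ctr u *m M *m (P1 *m x)) 0 0 + (ctr u *m M *m (P2 *m x)) 0 0.
  by rewrite -entryD -mulmxDr.
by move: Ex; rewrite /d ipu => ->.
Qed.
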